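(* Let $A$ be a linear matrix. Then $A$ is balanced if and only if $A$ does not contain any submatrix congruent to $C_3$ and $G_A$ is a diamond-free graph that contains neither an odd hole nor an HOH-free multisun as an induced subgraph.
   Context: A $\{0,1\}$-matrix is linear if it has no $2\times2$ submatrix with all entries $1$; it is balanced if it has no square submatrix of odd order with exactly two 1's in every row and column. Matrices are congruent if one is obtained from the other by permuting rows and columns; $C_3$ is the $3\times3$ matrix with $c_{i,j}=1$ iff $j\in\{i,i+1\}$ mod $3$. The intersection graph $G_A$ has the columns of $A$ as vertices, two being adjacent iff they are non-orthogonal. A graph is diamond-free if it has no induced $K_4$ minus an edge; an odd hole is an induced cycle of odd length at least $5$. A multisun is a diamond-free graph $G$ of odd order whose maximal cliques of size $2$ form the edge set of a Hamiltonian cycle $C$ (the rim); the other maximal cliques consist of pairwise nonconsecutive vertices of $C$ (inscribed cliques). A sub-multisun is obtained by deleting the edge sets of some, but not all, inscribed cliques. A multisun is HOH-free if neither it nor any of its sub-multisuns contains an odd hole as an induced subgraph. *)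

(* Defs.v *)
From mathcomp Require Import all_boot all_algebra.
Set Implicit Arguments. Unset Strict Implicit. Unset Printing Implicit Defensive.

Definition linear_mx (m n : nat) (A : 'M[bool]_(m, n)) : Prop :=
  ~ exists (r1 r2 : 'I_m) (c1 c2 : 'I_n),
      [/\ r1 != r2, c1 != c2 & [&& A r1 c1, A r1 c2, A r2 c1 & A r2 c2]].

Definition balanced_mx (m n : nat) (A : 'M[bool]_(m, n)) : Prop :=
  ~ exists (k : nat) (f : 'I_k -> 'I_m) (g : 'I_k -> 'I_n),
      [/\ odd k, injective f, injective g,
          (forall i : 'I_k, #|[set j : 'I_k | A (f i) (g j)]| = 2) &
          (forall j : 'I_k, #|[set i : 'I_k | A (f i) (g j)]| = 2)].

Definition C3 (i j : 'I_3) : bool := (val j == val i) || (val j == (val i).+1 %% 3).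

(* A contains a submatrix congruent to C_3 (rows/columns chosen injectively,
   in arbitrary order, which accounts for the permutations). *)
Definition has_C3 (m n : nat) (A : 'M[bool]_(m, n)) : Prop :=
  exists (f : 'I_3 -> 'I_m) (g : 'I_3 -> 'I_n),
    [/\ injective f, injective g & forall i j, A (f i) (g j) = C3 i j].

Definition GA (m n : nat) (A : 'M[bool]_(m, n)) : rel 'I_n :=
  fun c c' => (c != c') && [exists r : 'I_m, A r c && A r c'].

Section Graphs.
Variable V : finType.

Definition is_clique (S : {set V}) (e : rel V) (K : {set V}) : Prop :=
  K \subset S /\ forall x y, x \in K -> y \in K -> x != y -> e x y.

Definition is_maxclique (S : {set V}) (e : rel V) (K : {set V}) : Prop :=
  is_clique S e K /\
  forall K', is_clique S e K' -> K \subset K' -> K' = K.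

Definition diamond_free (S : {set V}) (e : rel V) : Prop :=
  ~ exists a b c d : V,
      [/\ uniq [:: a; b; c; d], all (mem S) [:: a; b; c; d],
          [&& e a b, e a c, e b c, e a d & e b d] & ~~ e c d].

Definition cyc_adj (k : nat) (i j : 'I_k) : bool :=
  (val j == (val i).+1 %% k) || (val i == (val j).+1 %% k).

Definition has_odd_hole (S : {set V}) (e : rel V) : Prop :=
  exists (k : nat) (f : 'I_k -> V),
    [/\ odd k, 5 <= k, injective f, (forall i, f i \in S) &
        forall i j, e (f i) (f j) = cyc_adj i j].

Definition multisun_cycle (S : {set V}) (e : rel V) (k : nat) (f : 'I_k -> V) : Prop :=
  [/\ injective f, [set f i | i in 'I_k] = S,
      (forall i j : 'I_k, i != j ->
          (is_maxclique S e [set f i; f j] <-> cyc_adj i j)) &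
      (forall K, is_maxclique S e K -> #|K| != 2 ->
          forall i j : 'I_k, f i \in K -> f j \in K -> ~~ cyc_adj i j)].

Definition multisun (S : {set V}) (e : rel V) : Prop :=
  [/\ odd #|S|, diamond_free S e &
      exists (k : nat) (f : 'I_k -> V), multisun_cycle S e f].

Definition inscribed (S : {set V}) (e : rel V) (K : {set V}) : Prop :=
  is_maxclique S e K /\ #|K| != 2.

Definition delete_cliques (e : rel V) (D : {set {set V}}) : rel V :=
  fun x y => e x y && ~~ [exists K in D, (x \in K) && (y \in K)].

Definition sub_multisun_sel (S : {set V}) (e : rel V) (D : {set {set V}}) : Prop :=
  [/\ D != set0, (forall K, K \in D -> inscribed S e K) &
      exists K, inscribed S e K /\ K \notin D].

Definition HOH_free_multisun (S : {set V}) (e : rel V) : Prop :=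
  [/\ multisun S e, ~ has_odd_hole S e &
      forall D, sub_multisun_sel S e D -> ~ has_odd_hole S (delete_cliques e D)].

End Graphs.

(* Main.v *)
Require Import Defs.
From mathcomp Require Import all_boot all_algebra zify.
From Stdlib Require Classical_Prop.
Set Implicit Arguments. Unset Strict Implicit. Unset Printing Implicit Defensive.

Lemma modS_if (a k : nat) : a < k -> a.+1 %% k = if a.+1 < k then a.+1 else 0.
Proof. move=> h. case: ifP=> h2; first by rewrite modn_small.
have -> : a.+1 = k by lia. by rewrite modnn. Qed.

Lemma modP_if (j k : nat) : j < k -> (j + k.-1) %% k = if j == 0 then k.-1 else j.-1.
Proof. move=> h. case: ifP=> /eqP h2.
  subst j; rewrite add0n modn_small //; lia.
have -> : j + k.-1 = j.-1 + k by lia. by rewrite modnDr modn_small //; lia. Qed.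

Definition cadj k a b := (b == a.+1 %% k) || (a == b.+1 %% k).

Lemma AR_tri k a b c : 4 <= k -> a < k -> b < k -> c < k ->
  cadj k a b -> cadj k b c -> cadj k a c -> False.
Proof. rewrite /cadj => k4 ha hb hc.
rewrite (modS_if ha) (modS_if hb) (modS_if hc).
case: ifP; case: ifP; case: ifP; lia. Qed.

Lemma AR_two k i j : 3 <= k -> i < k -> j < k ->
  (j == i) || (j == i.+1 %% k) ->
  (j.+1 %% k == i) || (j.+1 %% k == i.+1 %% k) -> j = i.
Proof. move=> k3 hi hj. rewrite (modS_if hi) (modS_if hj).
case: ifP; case: ifP; lia. Qed.

Section Mat.
Variables (m n : nat) (A : 'M[bool]_(m, n)).

Definition CW k (r : nat -> 'I_m) (c : nat -> 'I_n) :=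
  (forall i j, i < k -> j < k -> c i = c j -> i = j) /\
  (forall i j, i < k -> j < k -> A (r i) (c j) = (j == i) || (j == i.+1 %% k)).

Lemma CW_rinj k r c : 3 <= k -> CW k r c -> forall i j, i < k -> j < k -> r i = r j -> i = j.
Proof.
move=> k3 [ci H] i j hi hj e.
have h1 : A (r i) (c j) by rewrite e H // eqxx.
have hj1 : j.+1 %% k < k by rewrite ltn_pmod //; lia.
have h2 : A (r i) (c (j.+1 %% k)) by rewrite e H // eqxx orbT.
rewrite H // in h1; rewrite H // in h2.
by rewrite (AR_two k3 hi hj h1 h2).
Qed.

Lemma CW_unbal k r c : odd k -> 3 <= k -> CW k r c -> ~ balanced_mx A.
Proof.
move=> ok k3 cw; have [ci H] := cw; rewrite /balanced_mx => hb; apply: hb.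
have kp : 0 < k by lia.
exists k, (fun i : 'I_k => r i), (fun j : 'I_k => c j); split => //.
- move=> i j /(CW_rinj k3 cw (ltn_ord i) (ltn_ord j)) e; exact: val_inj.
- move=> i j /(ci _ _ (ltn_ord i) (ltn_ord j)) e; exact: val_inj.
- move=> i.
  have -> : [set j : 'I_k | A (r i) (c j)] = [set i; Ordinal (ltn_pmod i.+1 kp)].
    apply/setP => j; rewrite !inE -!val_eqE /= H //.
  rewrite cards2 -val_eqE /=.
  by move: (ltn_ord i); rewrite modS_if //; case: ifP; lia.
- move=> j.
  have hp : (j + k.-1) %% k < k by rewrite ltn_pmod.
  have -> : [set i : 'I_k | A (r i) (c j)] = [set j; Ordinal hp].
    apply/setP => i; rewrite !inE -!val_eqE /= H //.
    by move: (ltn_ord i) (ltn_ord j); rewrite modS_if // modP_if //; case: ifP; case: ifP; lia.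
  rewrite cards2 -val_eqE /=.
  by move: (ltn_ord j); rewrite modP_if //; case: ifP; lia.
Qed.


Lemma GA_row x y R : x != y -> A R x -> A R y -> GA A x y.
Proof. move=> xy hx hy; rewrite /GA xy /=; apply/existsP; exists R; by rewrite hx hy. Qed.

Lemma GA_ex x y : GA A x y -> x != y /\ exists R, A R x && A R y.
Proof. by rewrite /GA => /andP [xy /existsP [R hR]]; split => //; exists R. Qed.

Lemma GA_sym x y : GA A x y = GA A y x.
Proof. rewrite /GA eq_sym; congr (_ && _); apply/existsP/existsP => [][R hR]; exists R;
  by rewrite andbC. Qed.

Lemma lin_row (lin : linear_mx A) x y R R' :
  x != y -> A R x -> A R y -> A R' x -> A R' y -> R = R'.
Proof.
move=> xy a b c d; apply/eqP/negPn/negP => RR; apply: lin.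
by exists R, R', x, y; split => //; rewrite a b c d.
Qed.

Lemma noC3_CW3 r c : ~ has_C3 A -> CW 3 r c -> False.
Proof.
move=> nc cw; have [ci H] := cw; apply: nc.
exists (fun i : 'I_3 => r i), (fun j : 'I_3 => c j); split.
- move=> i j /(CW_rinj (leqnn 3) cw (ltn_ord i) (ltn_ord j)) e; exact: val_inj.
- move=> i j /(ci _ _ (ltn_ord i) (ltn_ord j)) e; exact: val_inj.
- by move=> i j; rewrite H.
Qed.

Lemma triangle x y z : ~ has_C3 A -> x != y -> y != z -> x != z ->
  GA A x y -> GA A y z -> GA A x z -> exists R, [&& A R x, A R y & A R z].
Proof.
move=> nc xy yz xz /GA_ex [_ [R1 /andP [a1 b1]]] /GA_ex [_ [R2 /andP [b2 c2]]]
  /GA_ex [_ [R3 /andP [a3 c3]]].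
case e1: (A R1 z); first by exists R1; rewrite a1 b1 e1.
case e2: (A R2 x); first by exists R2; rewrite e2 b2 c2.
case e3: (A R3 y); first by exists R3; rewrite a3 e3 c3.
exfalso; apply: (@noC3_CW3 (fun t => if t == 0 then R1 else if t == 1 then R2 else R3)
   (fun t => if t == 0 then x else if t == 1 then y else z) nc).
split.
- move=> i j hi hj.
  case: i hi => [|[|[|i]]] // _; case: j hj => [|[|[|j]]] //= _; move/eqP;
  by rewrite ?(negbTE xy) ?(negbTE yz) ?(negbTE xz) // eq_sym ?(negbTE xy) ?(negbTE yz) ?(negbTE xz).
- move=> i j hi hj.
  by case: i hi => [|[|[|i]]] // _; case: j hj => [|[|[|j]]] //= _.
Qed.

End Mat.

Section Walk.
Variables (m n : nat) (A : 'M[bool]_(m, n)).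
Variables (X : {set 'I_m}) (Y : {set 'I_n}).
Hypothesis HX : forall x, x \in X -> #|[set y in Y | A x y]| = 2.
Hypothesis HY : forall y, y \in Y -> #|[set x in X | A x y]| = 2.

Definition oc x y := odflt y [pick y' in [set y' in Y | A x y'] :\ y].
Definition orw y x := odflt x [pick x' in [set x' in X | A x' y] :\ x].

Lemma ocP x y : x \in X -> y \in Y -> A x y ->
  [/\ oc x y \in Y, A x (oc x y), oc x y != y &
      forall y', y' \in Y -> A x y' -> y' = y \/ y' = oc x y].
Proof.
move=> hx hy hxy.
set B := [set y' in Y | A x y'].
have yB : y \in B by rewrite inE hy hxy.
have : #|B :\ y| == 1 by move: (cardsD1 y B); rewrite yB HX //; case=> ->.
case/cards1P => w Bw.
have -> : oc x y = w.
  rewrite /oc -/B Bw; case: pickP => [w' |]; first by rewrite inE => /eqP.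
  by move/(_ w); rewrite inE eqxx.
have : w \in B :\ y by rewrite Bw set11.
rewrite !inE => /andP [wy /andP [wY xw]]; split => // y' y'Y xy'.
case: (eqVneq y' y) => [->|ne]; first by left.
right; have : y' \in B :\ y by rewrite !inE ne y'Y xy'.
by rewrite Bw inE => /eqP.
Qed.

Lemma orwP x y : x \in X -> y \in Y -> A x y ->
  [/\ orw y x \in X, A (orw y x) y, orw y x != x &
      forall x', x' \in X -> A x' y -> x' = x \/ x' = orw y x].
Proof.
move=> hx hy hxy.
set B := [set x' in X | A x' y].
have xB : x \in B by rewrite inE hx hxy.
have : #|B :\ x| == 1 by move: (cardsD1 x B); rewrite xB HY //; case=> ->.
case/cards1P => w Bw.
have -> : orw y x = w.
  rewrite /orw -/B Bw; case: pickP => [w' |]; first by rewrite inE => /eqP.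
  by move/(_ w); rewrite inE eqxx.
have : w \in B :\ x by rewrite Bw set11.
rewrite !inE => /andP [wx /andP [wX xw]]; split => // x' x'X xy'.
case: (eqVneq x' x) => [->|ne]; first by left.
right; have : x' \in B :\ x by rewrite !inE ne x'X xy'.
by rewrite Bw inE => /eqP.
Qed.

Lemma ocK x y : x \in X -> y \in Y -> A x y -> oc x (oc x y) = y.
Proof.
move=> hx hy hxy; have [wY xw wy _] := ocP hx hy hxy.
have [_ _ w2 H] := ocP hx wY xw.
by case: (H y hy hxy) => e; [move: wy; rewrite -e eqxx | rewrite -e].
Qed.

Lemma orwK x y : x \in X -> y \in Y -> A x y -> orw y (orw y x) = x.
Proof.
move=> hx hy hxy; have [wX xw wx _] := orwP hx hy hxy.
have [_ _ w2 H] := orwP wX hy xw.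
by case: (H x hx hxy) => e; [move: wx; rewrite -e eqxx | rewrite -e].
Qed.

Definition valid (p : 'I_m * 'I_n) := [&& p.1 \in X, p.2 \in Y & A p.1 p.2].
Definition sig (p : 'I_m * 'I_n) := (orw (oc p.1 p.2) p.1, oc p.1 p.2).
Definition rho (p : 'I_m * 'I_n) := (p.1, oc p.1 p.2).

Lemma valid_sig p : valid p -> valid (sig p).
Proof.
case/and3P => hx hy hxy; have [wY xw _ _] := ocP hx hy hxy.
have [zX zw _ _] := orwP hx wY xw.
by rewrite /valid /= zX wY zw.
Qed.

Lemma sig_rho p : valid p -> sig (rho (sig p)) = rho p.
Proof.
case: p => x y /and3P [/= hx hy hxy].
have [wY xw _ _] := ocP hx hy hxy.
have [zX zw _ _] := orwP hx wY xw.
rewrite /sig /rho /=.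
rewrite (ocK zX wY zw) (orwK hx wY xw) //.
Qed.

Lemma sig_inj p q : valid p -> valid q -> sig p = sig q -> p = q.
Proof.
case: p => x y /and3P [/= hx hy hxy]; case: q => x' y' /and3P [/= hx' hy' hxy'].
rewrite /sig /= => [[e1 e2]].
have [wY xw _ _] := ocP hx hy hxy.
have [wY' xw' _ _] := ocP hx' hy' hxy'.
have ex : x = x'.
  by rewrite -(orwK hx wY xw) e1 e2 (orwK hx' wY' xw').
subst x'; congr (_, _).
by rewrite -(ocK hx hy hxy) e2 (ocK hx hy' hxy').
Qed.

Variables (x0 : 'I_m) (y0 : 'I_n).
Hypotheses (hx0 : x0 \in X) (hy0 : y0 \in Y) (hxy0 : A x0 y0).

Definition P t := iter t sig (x0, y0).

Lemma validP t : valid (P t).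
Proof. elim: t => [|t IH]; first by rewrite /valid /= hx0 hy0 hxy0.
by rewrite /P iterS; apply: valid_sig. Qed.

Lemma PS t : P t.+1 = sig (P t).
Proof. by rewrite /P iterS. Qed.

Lemma Pshift a d : P (a + d) = P a -> P d = P 0.
Proof.
elim: a => [|a IH] //; rewrite addSn !PS => /(sig_inj (validP _) (validP _)); exact: IH.
Qed.

Lemma Prep : exists d, (0 < d) && (P d == P 0).
Proof.
pose N := #|{: 'I_m * 'I_n}|.+1.
case E: [exists a : 'I_N, exists b : 'I_N, (a < b) && (P a == P b)].
  move/existsP: E => [a /existsP [b /andP [ab /eqP e]]].
  exists (b - a); rewrite subn_gt0 ab /=; apply/eqP; apply: (@Pshift a).
  by rewrite subnKC ?e // ltnW.
exfalso.
have inj : injective (fun a : 'I_N => P a).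
  move=> a b e; apply/val_inj/eqP; case: (ltngtP a b) => // h; exfalso; move/negbT/negP: E; apply.
    by apply/existsP; exists a; apply/existsP; exists b; rewrite h e eqxx.
  by apply/existsP; exists b; apply/existsP; exists a; rewrite h e eqxx.
by move: (leq_card _ inj); rewrite card_ord ltnn.
Qed.

Definition L := ex_minn Prep.

Lemma LP : [/\ 0 < L, P L = P 0 & forall d, 0 < d -> P d = P 0 -> L <= d].
Proof.
rewrite /L; case: ex_minnP => l /andP [l0 /eqP e] H; split => // d d0 ed.
by apply: H; rewrite d0 ed eqxx.
Qed.

Lemma Pper t : P (t + L) = P t.
Proof. have [_ e _] := LP; by rewrite /P iterD -/(P L) e. Qed.

Lemma Pmul t q : P (t + q * L) = P t.
Proof. elim: q => [|q IH]; first by rewrite addn0.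
by rewrite mulSn addnA (addnC t L) -addnA addnC Pper IH. Qed.

Lemma Pmod t : P (t %% L) = P t.
Proof. by rewrite {2}(divn_eq t L) addnC Pmul. Qed.

Lemma Pinj s t : s < L -> t < L -> P s = P t -> s = t.
Proof.
have [_ _ H] := LP.
wlog st : s t / s <= t => [W hs ht e|hs ht e].
  case: (leqP s t) => h; first exact: W.
  by symmetry; apply: W => //; apply: ltnW.
have [lt|ge] := ltnP s t; last by lia.
exfalso.
have : P (t - s) = P 0 by apply: (@Pshift s); rewrite subnKC.
move=> e'; have : L <= t - s by apply: H => //; rewrite subn_gt0.
lia.
Qed.

Lemma rho_step t u : P t = rho (P u.+1) -> P t.+1 = rho (P u).
Proof. by move=> e; rewrite PS e PS sig_rho // validP. Qed.

Lemma rho_steps d t u : P t = rho (P (u + d)) -> P (t + d) = rho (P u).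
Proof.
elim: d t => [|d IH] t; first by rewrite !addn0.
by rewrite addnS => /rho_step; rewrite -addSnnS; apply: IH.
Qed.

Lemma NoRev t u : P t <> rho (P u).
Proof.
have [L0 _ _] := LP.
move=> e; rewrite -(Pmul u t) in e.
set u' := u + t * L in e.
have tu : t <= u' by rewrite /u'; nia.
have [odd_d|even_d] := boolP (odd (u' - t)).
- set k := (u' - t)./2.
  have eu : u' = (t + k).+1 + k by have := odd_double_half (u' - t); rewrite odd_d -addnn -/k; lia.
  rewrite eu in e; move/rho_steps: e.
  rewrite PS; move: (validP (t + k)); case: (P (t + k)) => x y /and3P [/= hx hy hxy].
  rewrite /sig /rho /= => [[e1 _]].
  have [wY xw _ _] := ocP hx hy hxy.
  have [_ _ ne _] := orwP hx wY xw.
  by move: ne; rewrite -e1 eqxx.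
- set k := (u' - t)./2.
  have eu : u' = (t + k) + k by have := odd_double_half (u' - t); rewrite (negbTE even_d) -addnn -/k; lia.
  rewrite eu in e; move/rho_steps: e.
  move: (validP (t + k)); case: (P (t + k)) => x y /and3P [/= hx hy hxy].
  rewrite /rho /= => [[e2]].
  have [_ _ ne _] := ocP hx hy hxy.
  by move: ne; rewrite -e2 eqxx.
Qed.


Definition rr t := (P t).1.
Definition cc t := (P t).2.

Lemma Pdef t : P t = (rr t, cc t).
Proof. by rewrite /rr /cc; case: (P t). Qed.

Lemma rcv t : [/\ rr t \in X, cc t \in Y & A (rr t) (cc t)].
Proof. by have /and3P [] := validP t. Qed.

Lemma ccS t : cc t.+1 = oc (rr t) (cc t).
Proof. by rewrite /cc PS. Qed.

Lemma rrS t : rr t.+1 = orw (cc t.+1) (rr t).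
Proof. by rewrite /rr /cc PS. Qed.

Lemma rr_mod t : rr (t %% L) = rr t. Proof. by rewrite /rr Pmod. Qed.
Lemma cc_mod t : cc (t %% L) = cc t. Proof. by rewrite /cc Pmod. Qed.
Lemma rr_per t : rr (t + L) = rr t. Proof. by rewrite /rr Pper. Qed.
Lemma cc_per t : cc (t + L) = cc t. Proof. by rewrite /cc Pper. Qed.

Lemma rr_nxt t : A (rr t) (cc t.+1).
Proof. have [hx hy hxy] := rcv t; have [_ h _ _] := ocP hx hy hxy; by rewrite ccS. Qed.

Lemma cc_neq t : cc t.+1 != cc t.
Proof. have [hx hy hxy] := rcv t; have [_ _ h _] := ocP hx hy hxy; by rewrite ccS. Qed.

Lemma rr_neq t : rr t.+1 != rr t.
Proof.
have [hx hy hxy] := rcv t; rewrite rrS ccS.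
have [wY xw _ _] := ocP hx hy hxy; by have [_ _ h _] := orwP hx wY xw.
Qed.

Lemma row_cols t y : y \in Y -> A (rr t) y -> y = cc t \/ y = cc t.+1.
Proof. have [hx hy hxy] := rcv t; have [_ _ _ H] := ocP hx hy hxy; rewrite ccS; exact: H. Qed.

Lemma col_rows t x : x \in X -> A x (cc t.+1) -> x = rr t \/ x = rr t.+1.
Proof.
have [hx _ _] := rcv t; have [_ wY _] := rcv t.+1.
rewrite rrS => hx' h; have [_ _ _ H] := orwP hx wY (rr_nxt t); exact: (H _ hx' h).
Qed.

Lemma rr_inj s t : s < L -> t < L -> rr s = rr t -> s = t.
Proof.
move=> hs ht e.
have [_ hy _] := rcv t; have [_ _ ht'] := rcv t.
rewrite -e in ht'.
case: (row_cols hy ht') => e2.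
  by apply: Pinj => //; rewrite !Pdef e e2.
exfalso; apply: (@NoRev t s); rewrite (Pdef t) /rho Pdef /= -e e2 ccS //.
Qed.

Lemma cc_inj s t : s < L -> t < L -> cc s = cc t -> s = t.
Proof.
wlog st : s t / s <= t => [W hs ht e|hs ht e].
  case: (leqP s t) => h; first exact: W.
  by symmetry; apply: W => //; apply: ltnW.
have [lt|ge] := ltnP s t; last by lia.
exfalso.
case: t lt ht e st => [//|t] lt ht e st.
have [hxs _ hs'] := rcv s; rewrite e in hs'.
case: (col_rows hxs hs') => e2.
  have est : s = t by apply: rr_inj => //; lia.
  by move: (cc_neq t); rewrite est in e; rewrite -e eqxx.
by move: (rr_inj hs ht e2); lia.
Qed.

Lemma L2 : 1 < L.
Proof.
have [L0 e _] := LP; case: L L0 e => [//|[|//]] _ e.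
by move: (cc_neq 0); rewrite /cc e eqxx.
Qed.

Lemma walk_CW : CW A L rr cc.
Proof.
have [L0 _ _] := LP.
split; first exact: cc_inj.
move=> i j hi hj.
have hi1 : i.+1 %% L < L by rewrite ltn_pmod.
apply/idP/idP.
- move=> h; have [_ hy _] := rcv j; case: (row_cols hy h) => e.
    by rewrite (cc_inj hj hi e) eqxx.
  by rewrite -(cc_mod i.+1) in e; rewrite (cc_inj hj hi1 e) eqxx orbT.
- case/orP => /eqP ->; first by have [] := rcv i.
  by rewrite cc_mod rr_nxt.
Qed.

Lemma clos_col t x : x \in X -> A x (cc t) -> exists u, u < L /\ x = rr u.
Proof.
have [L0 _ _] := LP.
move=> hx h; rewrite -cc_per in h.
have e : t + L = (t + L.-1).+1 by lia.
rewrite e in h; case: (col_rows hx h) => ->.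
  by exists ((t + L.-1) %% L); rewrite rr_mod ltn_pmod.
by exists ((t + L.-1).+1 %% L); rewrite rr_mod ltn_pmod.
Qed.

Lemma clos_row t y : y \in Y -> A (rr t) y -> exists u, u < L /\ y = cc u.
Proof.
have [L0 _ _] := LP.
move=> hy h; case: (row_cols hy h) => ->.
  by exists (t %% L); rewrite cc_mod ltn_pmod.
by exists (t.+1 %% L); rewrite cc_mod ltn_pmod.
Qed.

End Walk.

Lemma SW_CW m n (A : 'M[bool]_(m, n)) N : forall (X : {set 'I_m}) (Y : {set 'I_n}),
  #|X| <= N -> odd #|X| ->
  (forall x, x \in X -> #|[set y in Y | A x y]| = 2) ->
  (forall y, y \in Y -> #|[set x in X | A x y]| = 2) ->
  exists k r c, [/\ odd k, 2 < k & CW A k r c].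
Proof.
elim: N => [|N IH] X Y hN oX HX HY.
  by move: oX; have -> : #|X| = 0 by lia.
have : 0 < #|X| by move: oX; case: #|X|.
case/card_gt0P => x0 hx0.
have : 0 < #|[set y in Y | A x0 y]| by rewrite HX.
case/card_gt0P => y0; rewrite inE => /andP [hy0 hxy0].
set Lw := L HX HY hx0 hy0 hxy0.
have cw : CW A Lw (rr A X Y x0 y0) (cc A X Y x0 y0) := walk_CW HX HY hx0 hy0 hxy0.
have L2w : 1 < Lw := L2 HX HY hx0 hy0 hxy0.
case oL: (odd Lw).
  exists Lw, (rr A X Y x0 y0), (cc A X Y x0 y0); split => //.
  rewrite ltn_neqAle L2w andbT; apply/eqP => e; by rewrite -e in oL.
set RS := [set rr A X Y x0 y0 (val t) | t : 'I_Lw].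
set CS := [set cc A X Y x0 y0 (val t) | t : 'I_Lw].
have RSsub : RS \subset X.
  by apply/subsetP => x /imsetP [t _ ->]; have [] := rcv HX HY hx0 hy0 hxy0 t.
have CSsub : CS \subset Y.
  by apply/subsetP => x /imsetP [t _ ->]; have [] := rcv HX HY hx0 hy0 hxy0 t.
have cRS : #|RS| = Lw.
  rewrite card_imset ?card_ord // => i j /(@rr_inj _ _ _ _ _ HX HY _ _ hx0 hy0 hxy0 _ _ (ltn_ord i) (ltn_ord j)).
  exact: val_inj.
have LX : Lw <= #|X| by rewrite -cRS subset_leq_card.
have cX' : #|X :\: RS| = #|X| - Lw by rewrite cardsD (setIidPr RSsub) cRS.
apply: (IH (X :\: RS) (Y :\: CS)).
- by rewrite cX'; lia.
- by rewrite cX' oddB // oX oL.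
- move=> x; rewrite inE => /andP [xnR xX].
  rewrite -(HX x xX); have -> // : [set y in Y :\: CS | A x y] = [set y in Y | A x y].
  apply/setP => y; rewrite !inE.
  case hy: (y \in Y); case hxy: (A x y); rewrite ?andbF ?andbT //=.
  apply/negP => /imsetP [t _ et]; rewrite et in hxy.
  have [u [hu ex]] := clos_col HX HY hx0 hy0 hxy0 xX hxy.
  by move/negP: xnR; apply; apply/imsetP; exists (Ordinal hu).
- move=> y; rewrite inE => /andP [ynC yY].
  rewrite -(HY y yY); have -> // : [set x in X :\: RS | A x y] = [set x in X | A x y].
  apply/setP => x; rewrite !inE.
  case hx: (x \in X); case hxy: (A x y); rewrite ?andbF ?andbT //=.
  apply/negP => /imsetP [t _ et]; rewrite et in hxy.
  have [u [hu ey]] := clos_row HX HY hx0 hy0 hxy0 yY hxy.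
  by move/negP: ynC; apply; apply/imsetP; exists (Ordinal hu).
Qed.

Lemma unbal_CW m n (A : 'M[bool]_(m, n)) : ~ balanced_mx A ->
  exists k r c, [/\ odd k, 2 < k & CW A k r c].
Proof.
move=> /Classical_Prop.NNPP [k [f [g [ok fi gi Hr Hc]]]].
apply: (@SW_CW m n A #|[set f i | i : 'I_k]| [set f i | i : 'I_k] [set g i | i : 'I_k]) => //.
- by rewrite card_imset // card_ord.
- move=> x /imsetP [i _ ->]; rewrite -(Hr i) -(card_imset _ gi); apply: eq_card => y; rewrite !inE; apply/idP/idP.
    by case/andP => /imsetP [j _ ->] h; apply/imsetP; exists j; rewrite // inE.
  by case/imsetP => j; rewrite inE => h ->; rewrite h andbT; apply/imsetP; exists j.
- move=> y /imsetP [j _ ->]; rewrite -(Hc j) -(card_imset _ fi); apply: eq_card => x; rewrite !inE; apply/idP/idP.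
    by case/andP => /imsetP [i _ ->] h; apply/imsetP; exists i; rewrite // inE.
  by case/imsetP => i; rewrite inE => h ->; rewrite h andbT; apply/imsetP; exists i.
Qed.

Section Mat2.
Variables (m n : nat) (A : 'M[bool]_(m, n)).

Definition Rrow (r0 : 'I_m) x y := odflt r0 [pick R | A R x && A R y].

Lemma RrowP r0 x y : GA A x y -> A (Rrow r0 x y) x && A (Rrow r0 x y) y.
Proof.
case/GA_ex => _ [R hR]; rewrite /Rrow; case: pickP => [R' -> //|]; by move/(_ R); rewrite hR.
Qed.

Lemma cyc_adj_inord L' (a b : nat) : a <= L' -> b <= L' ->
  cyc_adj (inord a : 'I_L'.+1) (inord b) = cadj L'.+1 a b.
Proof. by move=> ha hb; rewrite /cyc_adj /cadj /= !inordK. Qed.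

Lemma hole_CW (S : {set 'I_n}) (e : rel 'I_n) :
  (forall x y, e x y -> GA A x y) ->
  (forall R x y z, x \in S -> y \in S -> z \in S -> A R x -> A R y -> A R z ->
      x != z -> y != z -> e x y -> e x z) ->
  has_odd_hole S e ->
  exists L r c, [/\ odd L, 4 < L, CW A L r c, (forall t, t < L -> c t \in S) &
      forall a b, a < L -> b < L -> e (c a) (c b) = cadj L a b].
Proof.
move=> eG Hcl [L [h [oL L5 hi hS He]]].
case: L h oL L5 hi hS He => [//|L'] h oL L5 hi hS He.
set L := L'.+1.
pose c t := h (inord t).
have Hc : forall a b, a < L -> b < L -> e (c a) (c b) = cadj L a b.
  by move=> a b ha hb; rewrite /c He cyc_adj_inord.
have ci : forall a b, a < L -> b < L -> c a = c b -> a = b.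
  by move=> a b ha hb /hi /(congr1 val); rewrite /= !inordK.
have cS : forall t, t < L -> c t \in S by move=> t _; exact: hS.
have sL : forall i, i < L -> i.+1 %% L < L by move=> i _; rewrite ltn_pmod.
have e01 : forall i, i < L -> e (c i) (c (i.+1 %% L)).
  by move=> i hi'; rewrite Hc ?sL // /cadj eqxx.
have e10 : forall i, i < L -> e (c (i.+1 %% L)) (c i).
  by move=> i hi'; rewrite Hc ?sL // /cadj eqxx orbT.
have [_ [r0 _]] := GA_ex (eG _ _ (e01 0 (ltn0Sn _))).
pose r t := Rrow r0 (c t) (c (t.+1 %% L)).
exists L, r, c; split => //.
split => // i j hi' hj.
have /andP [R1 R2] := RrowP r0 (eG _ _ (e01 i hi')).
apply/idP/idP.
- move=> Rj; apply/negPn/negP; rewrite negb_or => /andP [ji js].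
  have nci : c i != c j by apply/eqP => /ci; move/(_ hi' hj)=> E; move: ji; rewrite E eqxx.
  have ncs : c (i.+1 %% L) != c j.
    by apply/eqP => /ci; move/(_ (sL _ hi') hj)=> E; move: js; rewrite E eqxx.
  have h1 := Hcl _ _ _ _ (cS _ hi') (cS _ (sL _ hi')) (cS _ hj) R1 R2 Rj nci ncs (e01 _ hi').
  have h2 := Hcl _ _ _ _ (cS _ (sL _ hi')) (cS _ hi') (cS _ hj) R2 R1 Rj ncs nci (e10 _ hi').
  rewrite Hc // in h1; rewrite Hc ?sL // in h2.
  have h3 : cadj L i (i.+1 %% L) by rewrite /cadj eqxx.
  exact: (AR_tri (ltnW L5) hi' (sL _ hi') hj h3 h2 h1).
- by case/orP => /eqP ->.
Qed.

Lemma CW_S (S : {set 'I_n}) k r c : CW A k r c -> (forall t, t < k -> c t \in S) -> k <= #|S|.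
Proof.
move=> [ci _] cS.
have -> : k = #|[set c (val t) | t : 'I_k]|.
  rewrite card_imset ?card_ord // => i j /(ci _ _ (ltn_ord i) (ltn_ord j)); exact: val_inj.
by apply: subset_leq_card; apply/subsetP => x /imsetP [t _ ->]; exact: cS (ltn_ord t).
Qed.


Lemma diamond_ok : ~ has_C3 A -> linear_mx A -> diamond_free [set: 'I_n] (GA A).
Proof.
move=> nc lin [a [b [c [d [u _ /and5P [ab ac bc ad bd] ncd]]]]].
move: u; rewrite /= !inE !negb_or => /and4P [/and3P [nab nac nad] /andP [nbc nbd] ncd' _].
have [R1 /and3P [a1 b1 c1]] := triangle nc nab nbc nac ab bc ac.
have [R2 /and3P [a2 b2 d2]] := triangle nc nab nbd nad ab bd ad.
have e := lin_row lin nab a1 b1 a2 b2; subst R2.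
by move/negP: ncd; apply; apply: (GA_row ncd' c1 d2).
Qed.

Lemma multisun_CW S : multisun S (GA A) -> exists k r c, [/\ odd k, 2 < k & CW A k r c].
Proof.
case=> oS _ [k [f [fi fim Hrim Hins]]].
have kS : #|S| = k by rewrite -fim card_imset // card_ord.
rewrite kS in oS.
case: k f fi fim Hrim Hins kS oS => [//|k'] f fi fim Hrim Hins kS oS.
have fS : forall i, f i \in S by move=> i; rewrite -fim imset_f.
have k3 : 2 < k'.+1.
  case: k' f fi fim Hrim Hins kS oS fS => [|[|k']] f fi fim Hrim Hins kS oS fS //.
  exfalso.
  have mx : is_maxclique S (GA A) S.
    split; first split => //.
      move=> x y hx hy; rewrite -fim in hx hy; case/imsetP: hx => i _ ->; case/imsetP: hy => j _ ->.
      by rewrite (ord1 i) (ord1 j) eqxx.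
    by move=> K' [sub _] h; apply/eqP; rewrite eqEsubset sub h.
  have nn : #|S| != 2 by rewrite kS.
  by have := Hins S mx nn ord0 ord0 (fS _) (fS _).
set k := k'.+1.
pose c t := f (inord t).
have sL : forall i, i < k -> i.+1 %% k < k by move=> i _; rewrite ltn_pmod.
have cS : forall t, c t \in S by move=> t; exact: fS.
have ci : forall a b, a < k -> b < k -> c a = c b -> a = b.
  by move=> a b ha hb /fi /(congr1 val); rewrite /= !inordK.
have rim : forall i, i < k -> is_maxclique S (GA A) [set c i; c (i.+1 %% k)].
  move=> i hi; apply/(Hrim (inord i) (inord (i.+1 %% k))).
    rewrite -val_eqE /= inordK // inordK; last exact: sL. rewrite (modS_if hi); case: ifP; lia.
  by rewrite cyc_adj_inord; [rewrite /cadj /k eqxx | exact: hi | exact: sL].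
have edge : forall i, i < k -> GA A (c i) (c (i.+1 %% k)).
  move=> i hi; have [[_ H] _] := rim i hi; apply: H; rewrite ?inE ?eqxx ?orbT //.
  apply/eqP => /ci; move/(_ hi (sL _ hi)); rewrite (modS_if hi); case: ifP; lia.
have [_ [r0 _]] := GA_ex (edge 0 (ltn0Sn _)).
pose r t := Rrow r0 (c t) (c (t.+1 %% k)).
exists k, r, c; split => //; split => // i j hi hj.
have /andP [R1 R2] := RrowP r0 (edge i hi).
apply/idP/idP.
- move=> Rj; apply/negPn/negP; rewrite negb_or => /andP [ji js].
  have inR : forall x, x \in [set c i; c (i.+1 %% k); c j] -> A (r i) x.
    by move=> x; rewrite !inE => /orP [/orP [] | ] /eqP ->.
  have cl : is_clique S (GA A) [set c i; c (i.+1 %% k); c j].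
    split; first by apply/subsetP => x; rewrite !inE => /orP [/orP [] | ] /eqP ->.
    by move=> x y hx hy xy; apply: (GA_row xy (inR _ hx) (inR _ hy)).
  have [_ M] := rim i hi.
  have sub : [set c i; c (i.+1 %% k)] \subset [set c i; c (i.+1 %% k); c j].
    by apply/subsetP => x; rewrite !inE => /orP [] ->; rewrite ?orbT.
  have E := M _ cl sub.
  have : c j \in [set c i; c (i.+1 %% k)] by rewrite -E !inE eqxx !orbT.
  rewrite !inE => /orP [] /eqP /ci.
    by move/(_ hj hi) => E'; move: ji; rewrite E' eqxx.
  by move/(_ hj (sL _ hi)) => E'; move: js; rewrite E' eqxx.
- by case/orP => /eqP ->.
Qed.

End Mat2.

Lemma mod2k a k : a < k + k -> a %% k = if a < k then a else a - k.
Proof.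
move=> h; case: ifP => h2; first by rewrite modn_small.
have -> : a = (a - k) + k by lia.
rewrite modnDr modn_small; lia.
Qed.

Section Gen.
Variables (m n : nat) (A : 'M[bool]_(m, n)).

Lemma CW_rot k r c s : 0 < k -> CW A k r c ->
  CW A k (fun t => r ((t + s) %% k)) (fun t => c ((t + s) %% k)).
Proof.
move=> k0 [ci H]; split.
- move=> i j hi hj /ci; rewrite !ltn_pmod // => /(_ isT isT) /eqP.
  by rewrite eqn_modDr !modn_small // => /eqP.
- move=> i j hi hj; rewrite H ?ltn_pmod //.
  have -> : ((i + s) %% k).+1 %% k = (i.+1 + s) %% k by rewrite -addn1 modnDml addn1 addSn.
  by rewrite !eqn_modDr (modn_small hj) (modn_small hi).
Qed.

Lemma CW_arc k r c R j : CW A k r c -> 2 <= j -> j < k -> A R (c 0) -> A R (c j) ->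
  (forall l, 0 < l -> l < j -> ~~ A R (c l)) ->
  CW A j.+1 (fun t => if t < j then r t else R) c.
Proof.
move=> [ci H] j2 jk R0 Rj Rl; split.
- by move=> a b ha hb; apply: ci; lia.
- move=> i t hi ht; case: ifP => ij.
    rewrite H; try lia.
    by rewrite !modn_small //; lia.
  have -> : i = j by lia.
  rewrite modnn.
  case: (posnP t) => [->|t0]; first by rewrite R0 orbT.
  rewrite orbF.
  have [tj|tj] := ltnP t j.
    by rewrite (negbTE (Rl _ t0 tj)); apply/esym/eqP; lia.
  have -> : t = j by lia.
  by rewrite Rj eqxx.
Qed.

Hypothesis lin : linear_mx A.
Hypothesis nc : ~ has_C3 A.

Lemma big_row (S K : {set 'I_n}) : is_clique S (GA A) K -> 2 < #|K| ->
  exists R, forall x, x \in K -> A R x.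
Proof.
move=> [sub cl] /ltnW /card_gt1P [x [y [xK yK xy]]].
have [_ [R /andP [Rx Ry]]] := GA_ex (cl _ _ xK yK xy).
exists R => z zK.
case: (eqVneq z x) => [->//|zx]; case: (eqVneq z y) => [->//|zy].
have yz : y != z by rewrite eq_sym.
have xz : x != z by rewrite eq_sym.
have [R' /and3P [a b d]] := triangle nc xy yz xz (cl _ _ xK yK xy) (cl _ _ yK zK yz) (cl _ _ xK zK xz).
by rewrite -(lin_row lin xy a b Rx Ry).
Qed.


Lemma max_row (S K : {set 'I_n}) R : is_maxclique S (GA A) K ->
  (forall x, x \in K -> A R x) -> K = [set w in S | A R w].
Proof.
move=> [[sub cl] M] hR; apply/esym/M.
  split; first by apply/subsetP => x; rewrite inE => /andP [].
  by move=> x y; rewrite !inE => /andP [_ hx] /andP [_ hy] xy; exact: GA_row xy hx hy.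
by apply/subsetP => x xK; rewrite inE (subsetP sub _ xK) hR.
Qed.

Lemma same_max (S K1 K2 : {set 'I_n}) x y : is_maxclique S (GA A) K1 -> is_maxclique S (GA A) K2 ->
  2 < #|K1| -> 2 < #|K2| -> x != y -> x \in K1 -> y \in K1 -> x \in K2 -> y \in K2 -> K1 = K2.
Proof.
move=> M1 M2 c1 c2 xy x1 y1 x2 y2.
have [R1 H1] := big_row M1.1 c1; have [R2 H2] := big_row M2.1 c2.
have e := lin_row lin xy (H1 _ x1) (H1 _ y1) (H2 _ x2) (H2 _ y2); subst R2.
by rewrite (max_row M1 H1) (max_row M2 H2).
Qed.

End Gen.

Section Back.
Variables (m n : nat) (A : 'M[bool]_(m, n)).
Hypothesis lin : linear_mx A.
Hypothesis nc : ~ has_C3 A.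
Variables (k : nat) (r : nat -> 'I_m) (c : nat -> 'I_n).
Hypothesis cw : CW A k r c.
Hypothesis ok : odd k.
Hypothesis k5 : 4 < k.
Hypothesis minimal : forall k' r' c', k' < k -> odd k' -> 2 < k' -> CW A k' r' c' -> False.

Lemma k0 : 0 < k. Proof. lia. Qed.
Lemma sL i : i < k -> i.+1 %% k < k. Proof. by rewrite ltn_pmod // k0. Qed.
Lemma sne i : i < k -> i.+1 %% k != i.
Proof. move=> hi; rewrite (modS_if hi); case: ifP; lia. Qed.
Lemma ci i j : i < k -> j < k -> c i = c j -> i = j. Proof. by case: cw => h _; apply: h. Qed.
Lemma Hf i j : i < k -> j < k -> A (r i) (c j) = (j == i) || (j == i.+1 %% k).
Proof. by case: cw => _ h; apply: h. Qed.
Lemma rimc i j : i < k -> j < k -> A (r i) (c j) -> j = i \/ j = i.+1 %% k.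
Proof. by move=> hi hj; rewrite Hf // => /orP [] /eqP; [left|right]. Qed.
Lemma rim1 i : i < k -> A (r i) (c i). Proof. by move=> hi; rewrite Hf // eqxx. Qed.
Lemma rim2 i : i < k -> A (r i) (c (i.+1 %% k)). Proof. by move=> hi; rewrite Hf ?sL // eqxx orbT. Qed.
Lemma cne i : i < k -> c i != c (i.+1 %% k).
Proof. move=> hi; apply/eqP => /ci; move/(_ hi (sL hi)) => e; by move: (sne hi); rewrite -e eqxx. Qed.

Lemma two_hit R i j : i < k -> j < k -> i != j -> ~~ cadj k i j -> A R (c i) -> A R (c j) ->
  exists l, [/\ l < k, l != i, l != j & A R (c l)].
Proof.
move=> hi hj ij nadj Ri Rj.
case E: [exists l : 'I_k, [&& (val l != i), (val l != j) & A R (c l)]].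
  by move/existsP: E => [l /and3P [a b d]]; exists l.
exfalso.
have none : forall l, l < k -> A R (c l) -> l = i \/ l = j.
  move=> l hl Rl; case: (eqVneq l i) => [|li]; first by left.
  case: (eqVneq l j) => [|lj]; first by right.
  by exfalso; move/negbT/negP: E; apply; apply/existsP; exists (Ordinal hl); rewrite /= li lj Rl.
clear E.
wlog ij' : i j hi hj ij nadj Ri Rj none / i < j.
  move=> W; case: (ltngtP i j) => h; first exact: (W i j).
    apply: (W j i) => //; first by rewrite eq_sym.
      by rewrite /cadj orbC.
    by move=> l hl /(none _ hl) []; [right|left].
  by move: ij; rewrite h eqxx.
set d := j - i.
have [d2 dk] : 2 <= d /\ d <= k - 2.
  by move: nadj; rewrite /cadj (modS_if hi) (modS_if hj) /d; case: ifP; case: ifP; lia.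
have cw1 := CW_rot i k0 cw.
have a1 : CW A d.+1 (fun t => if t < d then r ((t + i) %% k) else R) (fun t => c ((t + i) %% k)).
  apply: (CW_arc cw1) => //; first by lia.
  - by rewrite add0n modn_small.
  - by rewrite /d subnK ?modn_small // ltnW.
  - move=> l l0 ld; rewrite modn_small; last by lia.
    by apply/negP => /(none _ _) []; lia.
have od : odd d.
  case/boolP: (odd d) => // nd; exfalso; move: a1; apply: minimal; try lia.
set e := k - d.
have cw2 := CW_rot j k0 cw.
have a2 : CW A e.+1 (fun t => if t < e then r ((t + j) %% k) else R) (fun t => c ((t + j) %% k)).
  apply: (CW_arc cw2); try lia.
  - by rewrite add0n modn_small.
  - have -> : e + j = i + k by rewrite /e /d; lia.
    by rewrite modnDr modn_small.
  - move=> l l0 le; rewrite mod2k; last by lia.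
    case: ifP => h; apply/negP => /(none _ _) []; lia.
move: a2; apply: minimal; try lia.
Qed.


Definition fS := fun i : 'I_k => c i.
Definition S := [set fS i | i in 'I_k].

Lemma cS t : t < k -> c t \in S.
Proof. by move=> h; apply/imsetP; exists (Ordinal h). Qed.

Lemma memS x : x \in S -> exists t, t < k /\ x = c t.
Proof. by case/imsetP => t _ ->; exists t. Qed.

Lemma edge i : i < k -> GA A (c i) (c (i.+1 %% k)).
Proof. by move=> hi; apply: GA_row (cne hi) (rim1 hi) (rim2 hi). Qed.

Lemma no_common i z : i < k -> z \in S -> z != c i -> z != c (i.+1 %% k) ->
  GA A z (c i) -> GA A z (c (i.+1 %% k)) -> False.
Proof.
move=> hi zS z1 z2 g1 g2.
have n1 : c (i.+1 %% k) != z by rewrite eq_sym.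
have n2 : c i != z by rewrite eq_sym.
have g1' : GA A (c (i.+1 %% k)) z by rewrite GA_sym.
have g2' : GA A (c i) z by rewrite GA_sym.
have [R /and3P [a b d]] := triangle nc (cne hi) n1 n2 (edge hi) g1' g2'.
have e := lin_row lin (cne hi) a b (rim1 hi) (rim2 hi); subst R.
have [t [ht ezt]] := memS zS; subst z.
by case: (rimc hi ht d) => e; subst t; [rewrite eqxx in z1 | rewrite eqxx in z2].
Qed.

Lemma rim_max i : i < k -> is_maxclique S (GA A) [set c i; c (i.+1 %% k)].
Proof.
move=> hi.
have inR : forall x, x \in [set c i; c (i.+1 %% k)] -> A (r i) x.
  by move=> x; rewrite !inE => /orP [] /eqP ->; [apply: rim1 | apply: rim2].
split.
  split; first by apply/subsetP => x; rewrite !inE => /orP [] /eqP ->; apply: cS => //; apply: sL.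
  by move=> x y hx hy xy; exact: GA_row xy (inR _ hx) (inR _ hy).
move=> K' [sub cl] h; apply/eqP; rewrite eqEsubset h andbT; apply/subsetP => z zK.
rewrite !inE; apply/negPn/negP; rewrite negb_or => /andP [z1 z2].
have iK : c i \in K' by apply: (subsetP h); rewrite !inE eqxx.
have sK : c (i.+1 %% k) \in K' by apply: (subsetP h); rewrite !inE eqxx orbT.
exact: (no_common hi (subsetP sub _ zK) z1 z2 (cl _ _ zK iK z1) (cl _ _ zK sK z2)).
Qed.

Lemma max_big K : is_maxclique S (GA A) K -> #|K| != 2 -> 2 < #|K|.
Proof.
move=> [[sub cl] M] K2; rewrite ltn_neqAle eq_sym K2 /=.
case: (leqP 2 #|K|) => // K1; exfalso.
have : (#|K| == 0) || (#|K| == 1) by lia.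
case/orP => [/eqP/cards0_eq E|/cards1P [x E]].
  have [cl' _] := rim_max k0.
  have := M _ cl'; rewrite E sub0set => /(_ isT) E'.
  by move: (set21 (c 0) (c (0.+1 %% k))); rewrite E' inE.
have xS : x \in S by apply: (subsetP sub); rewrite E set11.
have [t [ht ext]] := memS xS; subst x.
have [cl' _] := rim_max ht.
have := M _ cl'; rewrite E sub1set set21 => /(_ isT) E'.
move: (set22 (c t) (c (t.+1 %% k))); rewrite E' inE => /eqP e.
by move: (cne ht); rewrite e eqxx.
Qed.


Lemma fS_inj : injective fS.
Proof. by move=> i j /(ci (ltn_ord i) (ltn_ord j)) e; apply: val_inj. Qed.

Lemma clique_rim a K : a < k -> is_clique S (GA A) K -> c a \in K -> c (a.+1 %% k) \in K ->
  2 < #|K| -> False.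
Proof.
move=> ha [sub cl] aK bK big.
have : ~~ (K \subset [set c a; c (a.+1 %% k)]).
  apply/negP => /subset_leq_card; rewrite cards2; case: (_ != _); lia.
case/subsetPn => z zK; rewrite !inE negb_or => /andP [z1 z2].
exact: (no_common ha (subsetP sub _ zK) z1 z2 (cl _ _ zK aK z1) (cl _ _ zK bK z2)).
Qed.

Lemma msc : multisun_cycle S (GA A) fS.
Proof.
split => //; first exact: fS_inj.
- move=> i j ij; split.
  + move=> [[sub cl] M]; apply/negPn/negP => nadj.
    have fij : fS i != fS j by apply/eqP => /fS_inj e; rewrite e eqxx in ij.
    have /GA_ex [_ [R /andP [Ri Rj]]] := cl _ _ (set21 _ _) (set22 _ _) fij.
    have ij' : val i != val j by [].
    have [l [hl li lj Rl]] := two_hit (ltn_ord i) (ltn_ord j) ij' nadj Ri Rj.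
    have inR : forall x, x \in [set c i; c j; c l] -> A R x.
      by move=> x; rewrite !inE => /orP [/orP [] | ] /eqP ->.
    have cl' : is_clique S (GA A) [set c i; c j; c l].
      split; first by apply/subsetP => x; rewrite !inE => /orP [/orP [] | ] /eqP ->; apply: cS.
      by move=> x y hx hy xy; apply: (GA_row xy (inR _ hx) (inR _ hy)).
    have sub' : [set fS i; fS j] \subset [set c i; c j; c l].
      by apply/subsetP => x; rewrite !inE => /orP [] ->; rewrite ?orbT.
    have E := M _ cl' sub'.
    have : c l \in [set fS i; fS j] by rewrite -E !inE eqxx !orbT.
    rewrite !inE => /orP [] /eqP /ci => /(_ hl (ltn_ord _)) e.
      by rewrite e eqxx in li.
    by rewrite e eqxx in lj.
  + rewrite /cyc_adj => /orP [] /eqP e.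
      by have := rim_max (ltn_ord i); rewrite -e.
    by have := rim_max (ltn_ord j); rewrite -e setUC.
- move=> K [cl M] K2 i j hi hj; apply/negP; rewrite /cyc_adj => /orP [] /eqP e.
    by apply: (clique_rim (ltn_ord i) cl hi _ (max_big (conj cl M) K2)); rewrite -e.
  by apply: (clique_rim (ltn_ord j) cl hj _ (max_big (conj cl M) K2)); rewrite -e.
Qed.


Hypothesis hdf : diamond_free [set: 'I_n] (GA A).
Hypothesis hno : ~ has_odd_hole [set: 'I_n] (GA A).

Lemma cardS : #|S| = k.
Proof. by rewrite card_imset ?card_ord //; exact: fS_inj. Qed.

Lemma hoh : HOH_free_multisun S (GA A).
Proof.
split.
- split; first by rewrite cardS.
    move=> [a [b [c' [d [u _ h ncd]]]]]; apply: hdf.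
    by exists a, b, c', d; split => //; rewrite /= !inE.
  by exists k, fS; exact: msc.
- move=> [L [h [oL L5 hi hS He]]]; apply: hno; exists L, h; split => // i; by rewrite inE.
move=> D [D0 Dins [K0 [K0ins K0D]]] hole.
set e' := delete_cliques (GA A) D.
have eG : forall x y, e' x y -> GA A x y by move=> x y /andP [].
have Hcl : forall R x y z, x \in S -> y \in S -> z \in S -> A R x -> A R y -> A R z ->
      x != z -> y != z -> e' x y -> e' x z.
  move=> R x y z xS yS zS Rx Ry Rz xz yz /andP [gxy ndel].
  rewrite /e' /delete_cliques (GA_row xz Rx Rz) /=.
  apply/negP => /existsP [K /and3P [KD xK zK]].
  have [[cl M] K2] := Dins K KD.
  have big := max_big (conj cl M) K2.
  have [RK HK] := big_row lin nc cl big.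
  have e := lin_row lin xz (HK x xK) (HK z zK) Rx Rz; subst RK.
  have KE := max_row (conj cl M) HK.
  have yK : y \in K by rewrite KE inE yS Ry.
  by move/negP: ndel; apply; apply/existsP; exists K; rewrite KD xK yK.
have [L [r' [c' [oL L4 cw' c'S He']]]] := hole_CW eG Hcl hole.
have kL : k <= L.
  case: (ltnP L k) => // h; exfalso; apply: (minimal h oL _ cw'); lia.
have Lk : L <= k by rewrite -cardS; exact: CW_S cw' c'S.
have imS : S \subset [set c' (val t) | t : 'I_L].
  have sub : [set c' (val t) | t : 'I_L] \subset S.
    by apply/subsetP => x /imsetP [t _ ->]; exact: c'S (ltn_ord t).
  have : [set c' (val t) | t : 'I_L] == S.
    rewrite eqEcard sub /= cardS card_imset ?card_ord; first lia.
    by move=> i j /(cw'.1 _ _ (ltn_ord i) (ltn_ord j)) ee; apply: val_inj.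
  by move/eqP => ->.
have [[cl0 M0] K02] := K0ins.
have big0 := max_big (conj cl0 M0) K02.
have [cl0S cl0P] := cl0.
have notdel : forall u v, u \in K0 -> v \in K0 -> u != v -> e' u v.
  move=> u v uK vK uv; rewrite /e' /delete_cliques (cl0P _ _ uK vK uv) /=.
  apply/negP => /existsP [K /and3P [KD uK' vK']].
  have [MK K2] := Dins K KD.
  have EK := same_max lin nc MK (conj cl0 M0) (max_big MK K2) big0 uv uK' vK' uK vK.
  by move: K0D; rewrite -EK KD.
have idx : forall u, u \in K0 -> exists a, a < L /\ u = c' a.
  move=> u uK; have := subsetP imS _ (subsetP cl0S _ uK).
  by case/imsetP => t _ ->; exists t.
have [x [y [z [[xK yK zK] [xy yz zx]]]]] := card_gt2P big0.
have [a [ha ex]] := idx _ xK; have [b [hb ey]] := idx _ yK; have [d [hd ez]] := idx _ zK.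
have h1 := notdel _ _ xK yK xy; have h2 := notdel _ _ yK zK yz.
have xz : x != z by rewrite eq_sym.
have h3 := notdel _ _ xK zK xz.
rewrite ex ey ez in h1 h2 h3.
rewrite He' // in h1; rewrite He' // in h2; rewrite He' // in h3.
exact: (AR_tri (ltnW L4) ha hb hd h1 h2 h3).
Qed.

End Back.

Lemma back m n (A : 'M[bool]_(m, n)) : linear_mx A -> ~ has_C3 A ->
  diamond_free [set: 'I_n] (GA A) -> ~ has_odd_hole [set: 'I_n] (GA A) ->
  ~ (exists S : {set 'I_n}, HOH_free_multisun S (GA A)) ->
  forall N k r c, k <= N -> odd k -> 2 < k -> CW A k r c -> False.
Proof.
move=> lin nc hdf hno hms N; elim: N => [|N IH] k r c hk ok k3 cw; first lia.
case: (eqVneq k 3) => [e3|k3'].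
  subst k; exact: (noC3_CW3 nc cw).
have k5 : 4 < k.
  have : k != 4 by apply/eqP => e; rewrite e in ok.
  lia.
apply: hms; exists (S k c).
apply: (hoh lin nc cw ok k5 _ hdf hno).
move=> k' r' c' h1 h2 h3 cw'; apply: (IH k' r' c') => //; lia.
Qed.

Theorem proposition4 (m n : nat) (A : 'M[bool]_(m, n)) :
  linear_mx A ->
  (balanced_mx A <->
   [/\ ~ has_C3 A,
       diamond_free [set: 'I_n] (GA A),
       ~ has_odd_hole [set: 'I_n] (GA A) &
       ~ exists S : {set 'I_n}, HOH_free_multisun S (GA A)]).
Proof.
move=> lin; split.
- move=> bal.
  have nc : ~ has_C3 A.
    move=> [f [g [fi gi Hfg]]].
    have cw : CW A 3 (fun t => f (inord t)) (fun t => g (inord t)).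
      split.
        by move=> i j hi hj /gi /(congr1 val); rewrite /= !inordK.
      by move=> i j hi hj; rewrite Hfg /C3 /= !inordK.
    exact: (CW_unbal (isT : odd 3) (leqnn 3) cw bal).
  split => //.
  + exact: diamond_ok nc lin.
  + move=> hole.
    have eG : forall x y, GA A x y -> GA A x y by [].
    have Hcl : forall R x y z, x \in [set: 'I_n] -> y \in [set: 'I_n] -> z \in [set: 'I_n] ->
        A R x -> A R y -> A R z -> x != z -> y != z -> GA A x y -> GA A x z.
      by move=> R x y z _ _ _ Rx _ Rz xz _ _; exact: GA_row xz Rx Rz.
    have [L [r [c [oL L4 cw _ _]]]] := hole_CW eG Hcl hole.
    by apply: (CW_unbal oL _ cw bal); lia.
  + move=> [S [ms _ _]]; have [k [r [c [ok k3 cw]]]] := multisun_CW ms.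
    exact: (CW_unbal ok k3 cw bal).
- move=> [nc hdf hno hms] hex.
  have nb : ~ balanced_mx A by move=> b; exact: b hex.
  have [k [r [c [ok k3 cw]]]] := unbal_CW nb.
  exact: (back lin nc hdf hno hms (leqnn k) ok k3 cw).
Qed.
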